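(* Let $T$ be a binary search tree in the cursor model and consider any sequence of operations on $T$ consisting of $M$ cursor moves and $R$ rotations. Then there is a binary search tree $T'$, whose keys are those of $T$ together with two extra keys $\min$ and $\max$ (respectively smaller and larger than all keys of $T$), and a restricted sequence of operations on $T'$ consisting of $4M+3R$ cursor moves and $2M+R$ rotations, which simulates the sequence on $T$, i.e., the sequence of nodes visited by the cursor of $T$ is a subsequence of the sequence of nodes visited by the cursor of $T'$.
   Context: Cursor model of binary search trees: besides the tree there is a cursor located at a node (initially the root). The allowed operations are: compare the key at the cursor with the searched value; move the cursor to an adjacent node (left child, right child or parent); rotate the node at the cursor upwards (a single rotation, which makes the node the parent of its former parent while preserving the in-order key order). A sequence of operations on a tree is called restricted if (i) every node visited by the cursor or involved in a rotation has depth less than $3$ (depth = distance to the root, the root having depth $0$), and (ii) after every rotation the cursor moves back to the root. *)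

(* Defs.v *)
From mathcomp Require Import all_boot all_order all_algebra.
Set Implicit Arguments. Unset Strict Implicit. Unset Printing Implicit Defensive.
Import Order.TTheory GRing.Theory Num.Theory.

Inductive tree := Leaf | Node of tree & int & tree.

Fixpoint inorder (t : tree) : seq int :=
  match t with Leaf => [::] | Node l k r => inorder l ++ k :: inorder r end.

Definition is_bst (t : tree) : bool := sorted (fun x y : int => (x < y)%R) (inorder t).

(* Zipper representation of a tree with a cursor: the focused subtree
   (whose root is the node at the cursor) and the path back to the root. *)
Inductive frame :=
  | FL of int & tree   (* focus is the left child of a node with key k and right subtree r *)
  | FR of tree & int.  (* focus is the right child of a node with left subtree l and key k *)

Definition cursor := (tree * seq frame)%type.

Definition init (t : tree) : cursor := (t, [::]).

Definition depth (c : cursor) : nat := size c.2.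

Definition cursor_key (c : cursor) : option int :=
  if c.1 is Node _ k _ then Some k else None.

Inductive op := MoveL | MoveR | MoveUp | Rot.

Definition is_move (o : op) : bool := if o is Rot then false else true.
Definition is_rot (o : op) : bool := if o is Rot then true else false.
Definition is_up (o : op) : bool := if o is MoveUp then true else false.

Definition plug (t : tree) (f : frame) : tree :=
  match f with FL k r => Node t k r | FR l k => Node l k t end.

(* one operation; None if it is not applicable.  After a rotation the cursor
   stays on the rotated node (which is now at its former parent's position). *)
Definition step (c : cursor) (o : op) : option cursor :=
  match o, c with
  | MoveL, (Node (Node _ _ _ as l) k r, ctx) => Some (l, FL k r :: ctx)
  | MoveR, (Node l k (Node _ _ _ as r), ctx) => Some (r, FR l k :: ctx)
  | MoveUp, (t, f :: ctx) => Some (plug t f, ctx)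
  | Rot, (Node a x b, FL p c :: ctx) => Some (Node a x (Node b p c), ctx)
  | Rot, (Node a x b, FR c p :: ctx) => Some (Node (Node c p a) x b, ctx)
  | _, _ => None
  end.

Fixpoint run (c : cursor) (s : seq op) : option (seq cursor) :=
  match s with
  | [::] => Some [::]
  | o :: s' =>
      match step c o with
      | Some c' => omap (cons c') (run c' s')
      | None => None
      end
  end.

(* nodes (identified by their keys) visited by the cursor: the initial node,
   then the node reached after each cursor move *)
Definition visited (c0 : cursor) (ops : seq op) (sts : seq cursor) : seq (option int) :=
  cursor_key c0 :: map (fun p => cursor_key p.2) (filter (fun p => is_move p.1) (zip ops sts)).

(* restricted run: (i) every cursor position (hence every node visited and every
   node involved in a rotation, namely the cursor node and its parent) has depth < 3;
   (ii) after every rotation the cursor moves (by parent moves) back to the root. *)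
Definition restricted (c0 : cursor) (ops : seq op) (sts : seq cursor) : Prop :=
  all (fun c => depth c < 3) (c0 :: sts) /\
  forall i, i < size ops -> is_rot (nth MoveUp ops i) ->
    exists j, [/\ i <= j < size ops, depth (nth c0 sts j) = 0 &
      forall k, i < k <= j -> is_up (nth Rot ops k)].

(* Main.v *)
Require Import Defs.
From mathcomp Require Import all_boot all_order all_algebra.
From mathcomp Require Import zify.
Set Implicit Arguments. Unset Strict Implicit. Unset Printing Implicit Defensive.

Section Sim.
Variables mn mx : int.

Fixpoint lkey (ctx : seq frame) : int :=
  match ctx with [::] => mn | FR _ k :: _ => k | FL _ _ :: c => lkey c end.
Fixpoint lrest (ctx : seq frame) : tree :=
  match ctx with [::] => Leaf | FR l _ :: c => Node (lrest c) (lkey c) l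
  | FL _ _ :: c => lrest c end.
Fixpoint rkey (ctx : seq frame) : int :=
  match ctx with [::] => mx | FL k _ :: _ => k | FR _ _ :: c => rkey c end.
Fixpoint rrest (ctx : seq frame) : tree :=
  match ctx with [::] => Leaf | FL _ r :: c => Node r (rkey c) (rrest c)
  | FR _ _ :: c => rrest c end.

Definition enc (c : cursor) : tree :=
  match c.1 with
  | Node l x r => Node (Node (lrest c.2) (lkey c.2) l) x (Node r (rkey c.2) (rrest c.2))
  | Leaf => Leaf end.

End Sim.

Inductive good : seq op -> seq cursor -> Prop :=
| G_nil : good [::] [::]
| G_move o s ops sts : is_move o -> depth s < 3 -> good ops sts -> good (o :: ops) (s :: sts)
| G_rot0 s ops sts : depth s = 0 -> good ops sts -> good (Rot :: ops) (s :: sts)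
| G_rotup s1 s2 ops sts : depth s1 < 3 -> depth s2 = 0 -> good ops sts ->
    good (Rot :: MoveUp :: ops) (s1 :: s2 :: sts).

Lemma good_cat a b c d : good a b -> good c d -> good (a ++ c) (b ++ d).
Proof.
elim=> //= *; [apply: G_move | apply: G_rot0 | apply: G_rotup]; by auto.
Qed.

Lemma good_size a b : good a b -> size a = size b.
Proof. by elim=> //= *; congr (_.+1) => //; congr (_.+1). Qed.

Lemma good_sound ops sts : good ops sts ->
  all (fun c => depth c < 3) sts /\
  forall c0 i, i < size ops -> is_rot (nth MoveUp ops i) ->
    exists j, [/\ i <= j < size ops, depth (nth c0 sts j) = 0 &
      forall k, i < k <= j -> is_up (nth Rot ops k)].
Proof.
elim=> {ops sts}.
- by split=> // c0 i.
- move=> o s ops sts Ho Hs _ [Ha Hr]; split; first by rewrite /= Hs.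
  move=> c0 [|i] /=; first by case: o Ho.
  move=> Hi Hrot; have [j [/andP [H1 H2] H3 H4]] := Hr c0 i Hi Hrot.
  exists j.+1; split => //; first by apply/andP.
  by move=> [|k] //= Hk; apply: H4.
- move=> s ops sts Hs _ [Ha Hr]; split; first by rewrite /= Ha Hs.
  move=> c0 [|i] /=.
    move=> _ _; exists 0; split => //. by move=> k; case: k.
  move=> Hi Hrot; have [j [/andP [H1 H2] H3 H4]] := Hr c0 i Hi Hrot.
  exists j.+1; split => //; first by apply/andP.
  by move=> [|k] //= Hk; apply: H4.
- move=> s1 s2 ops sts Hs1 Hs2 _ [Ha Hr]; split; first by rewrite /= Ha Hs1 Hs2.
  move=> c0 [|[|i]] /=.
  + move=> _ _; exists 1; split => //. by move=> [|[|k]].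
  + by [].
  + move=> Hi Hrot; have [j [/andP [H1 H2] H3 H4]] := Hr c0 i Hi Hrot.
    exists j.+2; split => //; first by apply/andP.
    by move=> [|[|k]] //= Hk; apply: H4.
Qed.

Definition vis (ops : seq op) (sts : seq cursor) : seq (option int) :=
  map (fun p => cursor_key p.2) (filter (fun p => is_move p.1) (zip ops sts)).

Lemma vis_cat a b c d : size a = size b -> vis (a ++ c) (b ++ d) = vis a b ++ vis c d.
Proof. by move=> E; rewrite /vis zip_cat // filter_cat map_cat. Qed.

Lemma run_cat c s1 s2 t1 t2 : run c s1 = Some t1 -> run (last c t1) s2 = Some t2 ->
  run c (s1 ++ s2) = Some (t1 ++ t2).
Proof.
elim: s1 c t1 => [|o s1 IH] c t1 /=; first by case=> <-.
case: (step c o) => // c'; case E: (run c' s1) => [t1'|] //= [<-] /= H.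
by rewrite (IH _ _ E H).
Qed.

Definition SimP mn mx c ops sts := exists ops' sts',
  run (enc mn mx c, [::]) ops' = Some sts' /\ good ops' sts' /\
  count is_move ops' = 4 * count is_move ops + 3 * count is_rot ops /\
  count is_rot ops' = 2 * count is_move ops + count is_rot ops /\
  subseq (vis ops sts) (vis ops' sts').

Lemma combine mn mx c c1 o ops sts1 blk bsts :
  run (enc mn mx c, [::]) blk = Some bsts ->
  last (enc mn mx c, [::]) bsts = (enc mn mx c1, [::]) ->
  good blk bsts ->
  count is_move blk = (if is_move o then 4 else 3) ->
  count is_rot blk = (if is_move o then 2 else 1) ->
  is_rot o = ~~ is_move o ->
  (is_move o -> cursor_key c1 \in vis blk bsts) ->
  SimP mn mx c1 ops sts1 -> SimP mn mx c (o :: ops) (c1 :: sts1).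
Proof.
move=> Hr Hl Hg Hm Hrt Hor Hv [ops1 [sts1' [H1 [H2 [H3 [H4 H5]]]]]].
exists (blk ++ ops1), (bsts ++ sts1'); split.
  by apply: run_cat Hr _; rewrite Hl.
split; first exact: good_cat.
rewrite !count_cat Hm Hrt H3 H4 /= Hor.
split; first by case: (is_move o) => /=; lia.
split; first by case: (is_move o) => /=; lia.
rewrite vis_cat; last exact: good_size.
have -> : vis (o :: ops) (c1 :: sts1) =
  (if is_move o then [:: cursor_key c1] else [::]) ++ vis ops sts1.
  by rewrite /vis /=; case: (is_move o).
apply: cat_subseq => //; case Hmo: (is_move o) => //.
  by rewrite sub1seq; apply: Hv.
all: try exact: sub0seq.
Qed.

Ltac goodtac :=
  repeat first [ apply: G_nil
               | apply: G_rotup; [done|done|]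
               | apply: G_rot0; [done|]
               | apply: G_move; [done|done|] ].

Lemma sim mn mx ops : forall c sts, run c ops = Some sts ->
  (exists l x r, c.1 = Node l x r) -> SimP mn mx c ops sts.
Proof.
elim: ops => [|o ops IH] [t ctx] sts /=.
  case=> <- _; exists [::], [::]; split => //; split; first exact: G_nil.
  by [].
move=> Hrun [l [x [r /= Et]]]; subst t.
move: Hrun; case: o => /=.
- case: l => [|l1 y l2] //.
  case E: (run _ ops) => [sts1|] //= [<-].
  apply: (combine (blk := [:: MoveL; MoveR; Rot; MoveUp; MoveL; Rot])) => //=.
  + goodtac.
  + by move=> _; rewrite /vis /= !inE eqxx !orbT.
  + by apply: (IH _ _ E); do 3!eexists.
- case: r => [|r1 y r2] //.
  case E: (run _ ops) => [sts1|] //= [<-].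
  apply: (combine (blk := [:: MoveR; MoveL; Rot; MoveUp; MoveR; Rot])) => //=.
  + goodtac.
  + by move=> _; rewrite /vis /= !inE eqxx !orbT.
  + by apply: (IH _ _ E); do 3!eexists.
- case: ctx => [|[p c|m p] ctx] //.
  + case E: (run _ ops) => [sts1|] //= [<-].
    apply: (combine (blk := [:: MoveR; Rot; MoveL; MoveL; Rot; MoveUp])) => //=.
    * goodtac.
    * by move=> _; rewrite /vis /= !inE eqxx !orbT.
    * by apply: (IH _ _ E); do 3!eexists.
  + case E: (run _ ops) => [sts1|] //= [<-].
    apply: (combine (blk := [:: MoveL; Rot; MoveR; MoveR; Rot; MoveUp])) => //=.
    * goodtac.
    * by move=> _; rewrite /vis /= !inE eqxx !orbT.
    * by apply: (IH _ _ E); do 3!eexists.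
- case: ctx => [|[p c|m p] ctx] //.
  + case E: (run _ ops) => [sts1|] //= [<-].
    apply: (combine (blk := [:: MoveR; MoveR; Rot; MoveUp])) => //=.
    * goodtac.
    * by apply: (IH _ _ E); do 3!eexists.
  + case E: (run _ ops) => [sts1|] //= [<-].
    apply: (combine (blk := [:: MoveL; MoveL; Rot; MoveUp])) => //=.
    * goodtac.
    * by apply: (IH _ _ E); do 3!eexists.
Qed.

Lemma bound (s : seq int) : exists b : int, forall k, k \in s -> (- b < k)%R /\ (k < b)%R.
Proof.
elim: s => [|a s [b Hb]]; first by exists 0%R.
exists (`|b| + `|a| + 1)%R => k; rewrite inE => /orP [/eqP -> | /Hb [H1 H2]]; lia.
Qed.

Theorem lemma4p3 (T : tree) (ops : seq op) (sts : seq cursor) (M R : nat) :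
  T <> Leaf -> is_bst T ->
  run (init T) ops = Some sts ->
  count is_move ops = M -> count is_rot ops = R ->
  exists (T' : tree) (mn mx : int) (ops' : seq op) (sts' : seq cursor),
    is_bst T' /\
        (forall k, k \in inorder T -> (mn < k)%R /\ (k < mx)%R) /\
        inorder T' =i mn :: mx :: inorder T /\
        run (init T') ops' = Some sts' /\
        restricted (init T') ops' sts' /\
        count is_move ops' = 4 * M + 3 * R /\
        count is_rot ops' = 2 * M + R /\
        subseq (visited (init T) ops sts) (visited (init T') ops' sts').
Proof.
move=> HT Hbst Hrun HM HR.
have [b Hb] := bound (inorder T).
case ET: T HT Hbst Hrun Hb => [|l x r] // _ Hbst Hrun Hb.
have [ops' [sts' [H1 [H2 [H3 [H4 H5]]]]]] :=
  @sim (- b)%R b ops (init (Node l x r)) sts Hrun (ex_intro _ l (ex_intro _ x (ex_intro _ r erefl))).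
have Ein : inorder (enc (- b)%R b (init (Node l x r))) = (- b)%R :: rcons (inorder (Node l x r)) b.
  by rewrite /= -cats1 -catA.
have [Hx1 Hx2] : (- b < x)%R /\ (x < b)%R by apply: Hb; rewrite /= mem_cat inE eqxx orbT.
exists (enc (- b)%R b (init (Node l x r))), (- b)%R, b, ops', sts'.
split.
  rewrite /is_bst Ein /= rcons_path.
  apply/andP; split.
    have Hp : forall s : seq int, sorted (fun x y : int => (x < y)%R) s ->
        (forall k, k \in s -> (- b < k)%R) -> path (fun x y : int => (x < y)%R) (- b)%R s.
      by move=> [|h t] //= -> H; rewrite andbT H // inE eqxx.
    by apply: Hp => // k /Hb [].
  have := mem_last (- b)%R (inorder (Node l x r)).
  rewrite inE => /orP [/eqP -> | /Hb [_ ->]] //; lia.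
split; first exact: Hb.
split; first by move=> y; rewrite Ein in_cons mem_rcons.
split; first exact: H1.
split.
  have [Ha Hr] := good_sound H2; split; first by rewrite /= Ha.
  exact: Hr.
rewrite H3 H4 HM HR; split => //; split => //.
by rewrite /visited /= eqxx; exact: H5.
Qed.
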